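(* Let $n\ge0$ be an integer with $\chi_n<c^2$, and let $x_1<x_2<\dots$ be the roots of $\psi_n$ in $(1,\infty)$. Then $$x_2-x_1\le x_3-x_2\le\dots\le x_{k+1}-x_k\le\dots\le\frac{\pi}{c}.$$
   Context: For a real number $c>0$, let $\psi_0,\psi_1,\dots$ be the prolate spheroidal wave functions of band limit $c$: the real $L^2[-1,1]$-normalized eigenfunctions of $F_c[\varphi](x)=\int_{-1}^1\varphi(t)e^{icxt}\,dt$ with eigenvalues $\lambda_n$ ordered by $|\lambda_n|\ge|\lambda_{n+1}|$, extended to entire functions by $\lambda_n\psi_n(x)=\int_{-1}^1\psi_n(t)e^{icxt}\,dt$. $\chi_0<\chi_1<\dots$ are the positive numbers such that $\psi_n$ satisfies $(1-x^2)\psi''(x)-2x\psi'(x)+(\chi_n-c^2x^2)\psi(x)=0$ for all $x$. (Each $\psi_n$ has infinitely many roots in $(1,\infty)$.) *)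

(* Defs.v *)
From Stdlib Require Import Reals.
From Coquelicot Require Import Coquelicot.
Open Scope R_scope.

(* lam * phi(x) = \int_{-1}^1 phi(t) e^{i c x t} dt, for real-valued phi,
   written out in real and imaginary parts (lam : C). *)
Definition Fc_eig (c : R) (lam : C) (phi : R -> R) (x : R) : Prop :=
  Re lam * phi x = RInt (fun t => phi t * cos (c * x * t)) (-1) 1 /\
  Im lam * phi x = RInt (fun t => phi t * sin (c * x * t)) (-1) 1.

(* psi n : the n-th prolate spheroidal wave function of band limit c,
   extended to the whole real line by lam n * psi n x = F_c[psi n](x);
   lam n its eigenvalue; chi n the corresponding ODE eigenvalue. *)
Definition is_PSWF_family (c : R) (psi : nat -> R -> R) (lam : nat -> C)
    (chi : nat -> R) : Prop :=
  (forall n x, continuous (psi n) x) /\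
  (forall n x, Fc_eig c (lam n) (psi n) x) /\
  (forall n, RInt (fun t => psi n t ^ 2) (-1) 1 = 1) /\
  (forall n m, n <> m -> RInt (fun t => psi n t * psi m t) (-1) 1 = 0) /\
  (forall n, Cmod (lam (S n)) <= Cmod (lam n)) /\
  (forall (mu : C) (phi : R -> R),
      (forall x, -1 <= x <= 1 -> continuous phi x) ->
      (exists x, -1 <= x <= 1 /\ phi x <> 0) ->
      (forall x, -1 <= x <= 1 -> Fc_eig c mu phi x) ->
      exists n, mu = lam n) /\
  (forall n, 0 < chi n) /\
  (forall n, chi n < chi (S n)) /\
  (forall n x, ex_derive_n (psi n) 2 x /\
     (1 - x ^ 2) * Derive_n (psi n) 2 x - 2 * x * Derive_n (psi n) 1 x
       + (chi n - c ^ 2 * x ^ 2) * psi n x = 0).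

Definition enumerates_roots_gt1 (f : R -> R) (x : nat -> R) : Prop :=
  (forall k, 1 < x k /\ f (x k) = 0) /\
  (forall k, x k < x (S k)) /\
  (forall t, 1 < t -> f t = 0 -> exists k, x k = t).

(* Main.v *)
Require Import Defs.
From Stdlib Require Import Reals Lra Psatz.
From Coquelicot Require Import Coquelicot.
Open Scope R_scope.

Ltac req := match goal with |- @eq _ ?a ?b => change (@eq R a b) end.
Lemma is_derive_eq (f : R -> R) (x l l' : R) : is_derive f x l -> l = l' -> is_derive f x l'.
Proof. intros H ->; exact H. Qed.

Lemma cont_pt (h : R -> R) x : continuous h x -> continuity_pt h x.
Proof. intros H; apply continuity_pt_filterlim; exact H. Qed.

Lemma inner_der (h T T' : R -> R) (k : R) (Td : forall z, is_derive T z (T' z)) t x0 : is_derive (fun u => h t * T (k * u * t)) x0 (h t * (k * t * T' (k * x0 * t))).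
Proof.
  apply is_derive_scal.
  apply (is_derive_eq _ _ (scal (k*t) (T' (k * x0 * t)))).
  - apply (is_derive_comp T (fun u => k * u * t)). apply Td.
    auto_derive; [exact I| req; ring].
  - reflexivity.
Qed.

Lemma param_trig (h T T' : R -> R) (k : R) (hc : forall t, continuous h t)
  (Td : forall z, is_derive T z (T' z)) (T'c : forall z, continuous T' z) x : is_derive (fun x => RInt (fun t => h t * T (k * x * t)) (-1) 1) x
   (RInt (fun t => h t * (k * t * T' (k * x * t))) (-1) 1).
Proof.
  apply (is_derive_eq _ _ (RInt (fun t => Derive (fun u => h t * T (k * u * t)) x) (-1) 1)).
  - apply (is_derive_RInt_param (fun u t => h t * T (k * u * t))).
    + apply filter_forall. intros x0 t _. eexists. apply (inner_der h T T' k Td).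
    + intros t _. apply (continuity_2d_pt_ext (fun u v => h v * (k * v * T' (k * u * v)))).
      { intros u v. symmetry. apply is_derive_unique, (inner_der h T T' k Td). }
      apply continuity_2d_pt_mult.
      * apply (continuity_1d_2d_pt_comp h (fun u v => v)). apply cont_pt, hc.
        apply continuity_2d_pt_id2.
      * apply continuity_2d_pt_mult.
        apply continuity_2d_pt_mult. apply continuity_2d_pt_const. apply continuity_2d_pt_id2.
        apply (continuity_1d_2d_pt_comp T' (fun u v => k * u * v)). apply cont_pt, T'c.
        apply continuity_2d_pt_mult. apply continuity_2d_pt_mult. apply continuity_2d_pt_const.
        apply continuity_2d_pt_id1. apply continuity_2d_pt_id2.
    + apply filter_forall. intros y. apply (@ex_RInt_continuous R_CompleteNormedModule). intros z _.
      apply (continuous_mult h (fun t => T (k * y * t))). apply hc.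
      apply (continuous_comp (fun t => k * y * t) T).
      apply (continuous_mult (fun t => k * y) (fun t => t)). apply continuous_const. apply continuous_id.
      apply (@ex_derive_continuous R_AbsRing R_NormedModule). eexists; apply Td.
  - apply RInt_ext. intros t _. apply is_derive_unique, (inner_der h T T' k Td).
Qed.

Lemma deriv_zero (F : R -> R) w l : (forall w, F w = 0) -> is_derive F w l -> l = 0.
Proof.
  intros H D. rewrite <- (is_derive_unique _ _ _ D).
  rewrite (Derive_ext F (fun _ => 0)); auto. apply Derive_const.
Qed.

Lemma cont_hpow (h : R -> R) m : (forall t, continuous h t) -> forall t, continuous (fun t => h t * t^m) t.
Proof.
  intros hc t. apply (continuous_mult h (fun t => t^m)). apply hc.
  apply (@ex_derive_continuous R_AbsRing R_NormedModule). apply ex_derive_pow. apply ex_derive_id.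
Qed.

Lemma cos_d z : is_derive cos z (- sin z).
Proof. apply is_derive_Reals. apply derivable_pt_lim_cos. Qed.
Lemma sin_d z : is_derive sin z (cos z).
Proof. apply is_derive_Reals. apply derivable_pt_lim_sin. Qed.
Lemma cont_cos z : continuous cos z.
Proof. apply (@ex_derive_continuous R_AbsRing R_NormedModule). eexists; apply cos_d. Qed.
Lemma cont_sin z : continuous sin z.
Proof. apply (@ex_derive_continuous R_AbsRing R_NormedModule). eexists; apply sin_d. Qed.
Lemma cont_nsin z : continuous (fun z => - sin z) z.
Proof. apply (continuous_opp sin). apply cont_sin. Qed.

Lemma moments (h : R -> R) : (forall t, continuous h t) ->
  (forall w, RInt (fun t => h t * cos (1 * w * t)) (-1) 1 = 0 /\
             RInt (fun t => h t * sin (1 * w * t)) (-1) 1 = 0) ->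
  forall m w, RInt (fun t => (h t * t^m) * cos (1 * w * t)) (-1) 1 = 0 /\
              RInt (fun t => (h t * t^m) * sin (1 * w * t)) (-1) 1 = 0.
Proof.
  intros hc H0 m. induction m as [|m IH]; intros w.
  - split.
    + rewrite <- (proj1 (H0 w)). apply RInt_ext. intros; simpl; ring.
    + rewrite <- (proj2 (H0 w)). apply RInt_ext. intros; simpl; ring.
  - pose proof (cont_hpow h m hc) as hmc.
    pose proof (param_trig (fun t => h t * t^m) sin cos 1 hmc sin_d cont_cos w) as Ds.
    pose proof (param_trig (fun t => h t * t^m) cos (fun z => - sin z) 1 hmc cos_d cont_nsin w) as Dc.
    apply deriv_zero in Ds; [| intros; exact (proj2 (IH _))].
    apply deriv_zero in Dc; [| intros; exact (proj1 (IH _))].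
    split.
    + rewrite <- Ds. apply RInt_ext. intros t _. req. rewrite <- tech_pow_Rmult. ring.
    + transitivity (opp (RInt (fun t => h t * t ^ m * (1 * t * - sin (1 * w * t))) (-1) 1)).
      2: { rewrite Dc. unfold opp; simpl. req. ring. }
      rewrite <- (RInt_opp (V := R_CompleteNormedModule)).
      apply RInt_ext. intros t _. unfold opp; simpl. req. try rewrite <- tech_pow_Rmult. ring.
apply (@ex_RInt_continuous R_CompleteNormedModule). intros z _.
      apply (continuous_mult (fun t => h t * t^m) (fun t => 1 * t * - sin (1 * w * t))). apply hmc.
      apply (@ex_derive_continuous R_AbsRing R_NormedModule). auto_derive. exact I.
Qed.

Lemma lin3 (F G H : R -> R) a b c : is_RInt F (-1) 1 0 -> is_RInt G (-1) 1 0 -> is_RInt H (-1) 1 0 ->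
  RInt (fun t => a * F t + b * G t + c * H t) (-1) 1 = 0.
Proof.
  intros HF HG HH.
  pose proof (is_RInt_plus _ _ _ _ _ _ (is_RInt_plus _ _ _ _ _ _ (is_RInt_scal _ _ _ a _ HF)
     (is_RInt_scal _ _ _ b _ HG)) (is_RInt_scal _ _ _ c _ HH)) as K.
  pose proof (@is_RInt_unique R_CompleteNormedModule _ _ _ _ K) as K2. clear K. rename K2 into K.
  etransitivity; [| etransitivity; [exact K|]].
  - apply RInt_ext. intros; reflexivity.
  - unfold plus, scal; simpl. unfold mult; simpl. req. ring.
Qed.

Lemma cont_ex (f : R -> R) : (forall t, continuous f t) -> ex_RInt f (-1) 1.
Proof. intros H. apply (@ex_RInt_continuous R_CompleteNormedModule). intros; apply H. Qed.

Lemma kernel (h : R -> R) (s : R) : (forall t, continuous h t) ->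
  (forall m, RInt (fun t => h t * t^m) (-1) 1 = 0) ->
  forall N m, RInt (fun t => (h t * t^m) * (1 - (t - s)^2/4)^N) (-1) 1 = 0.
Proof.
  intros hc Hm N. induction N as [|N IH]; intros m.
  - rewrite <- (Hm m). apply RInt_ext. intros; req; ring.
  - assert (Hc : forall k t, continuous (fun t => h t * t^k * (1 - (t - s)^2/4)^N) t).
    { intros k t. apply (continuous_mult (fun t => h t * t^k) (fun t => (1 - (t - s)^2/4)^N)).
      apply cont_hpow; auto.
      apply (@ex_derive_continuous R_AbsRing R_NormedModule). auto_derive. exact I. }
    assert (Hi : forall k, is_RInt (fun t => h t * t^k * (1 - (t - s)^2/4)^N) (-1) 1 0).
    { intros k. rewrite <- (IH k). apply (RInt_correct (V := R_CompleteNormedModule)). apply cont_ex, Hc. }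
    rewrite <- (lin3 _ _ _ (1 - s^2/4) (s/2) (-1/4) (Hi m) (Hi (S m)) (Hi (S (S m)))).
    apply RInt_ext. intros t _. req. rewrite <- (tech_pow_Rmult t (S m)), <- (tech_pow_Rmult t m), <- (tech_pow_Rmult _ N). generalize (t^m) ((1 - (t - s) ^ 2 / 4)^N). intros A B. field.
Qed.

Lemma cont_exab (f : R -> R) a b : (forall t, continuous f t) -> ex_RInt f a b.
Proof. intros H. apply (@ex_RInt_continuous R_CompleteNormedModule). intros; apply H. Qed.

Lemma RInt_ge_const (f : R -> R) a b K : a <= b -> (forall t, continuous f t) ->
  (forall t, a < t < b -> K <= f t) -> K * (b - a) <= RInt f a b.
Proof.
  intros Hab Hc HK.
  replace (K * (b - a)) with (RInt (fun _ => K) a b).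
  - apply RInt_le; auto. apply ex_RInt_const. apply cont_exab; auto.
  - rewrite RInt_const. unfold scal; simpl. unfold mult; simpl. ring.
Qed.

Lemma chasles (f : R -> R) a b c : (forall t, continuous f t) ->
  RInt f a c = RInt f a b + RInt f b c.
Proof.
  intros H. rewrite <- (RInt_Chasles f a b c); try apply cont_exab; auto.
Qed.

Lemma q_cont s N t : continuous (fun t => (1 - (t - s)^2/4)^N) t.
Proof. apply (@ex_derive_continuous R_AbsRing R_NormedModule). auto_derive. exact I. Qed.

Lemma kill (h : R -> R) : (forall t, continuous h t) ->
  (forall s N, -1 < s < 1 -> RInt (fun t => h t * (1 - (t - s)^2/4)^N) (-1) 1 = 0) ->
  forall s, -1 < s < 1 -> h s <= 0.
Proof.
  intros hc HK s Hs.
  destruct (Rle_or_lt (h s) 0) as [|Hpos]; [assumption|exfalso].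
  set (delta := h s / 2).
  assert (Hd : 0 < delta) by (unfold delta; lra).
  destruct (hc s (fun y => Rabs (y - h s) < delta)) as [e0 He0].
  { exists (mkposreal _ Hd). intros y Hy. exact Hy. }
  set (eta := Rmin (e0 / 2) (Rmin ((1 - s) / 2) ((s + 1) / 2))).
  assert (He0p : 0 < e0) by apply cond_pos.
  assert (Heta : 0 < eta).
  { unfold eta. apply Rmin_glb_lt. lra. apply Rmin_glb_lt; lra. }
  assert (Heta1 : eta <= e0 / 2) by apply Rmin_l.
  assert (Heta2 : eta <= (1 - s) / 2) by (eapply Rle_trans; [apply Rmin_r| apply Rmin_l]).
  assert (Heta3 : eta <= (s + 1) / 2) by (eapply Rle_trans; [apply Rmin_r| apply Rmin_r]).
  assert (Hnear : forall t, s - eta <= t <= s + eta -> delta < h t).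
  { intros t Ht. assert (Habs : Rabs (h t - h s) < delta).
    { apply He0. unfold ball; simpl; unfold AbsRing_ball, abs, minus, plus, opp; simpl.
      apply Rabs_def1; lra. }
    apply Rabs_def2 in Habs. unfold delta in *. lra. }
  destruct (continuity_ab_maj (fun t => Rabs (h t)) (-1) 1 ltac:(lra)) as [Mx [HM _]].
  { intros c _. apply continuity_pt_filterlim. apply (continuous_comp h Rabs). apply hc.
    apply continuous_Rabs. }
  set (M := Rabs (h Mx) + 1).
  assert (HMp : 0 < M) by (unfold M; pose proof (Rabs_pos (h Mx)); lra).
  assert (HMb : forall t, -1 <= t <= 1 -> - M <= h t).
  { intros t Ht. specialize (HM t Ht). simpl in HM.
    unfold M. pose proof (Rle_abs (- h t)) as H0. rewrite Rabs_Ropp in H0. lra. }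
  set (a := 1 - eta^2/16). set (b := 1 - eta^2/4).
  assert (Heta1' : eta <= 1) by lra.
  assert (Hb : 0 < b) by (unfold b; nra).
  assert (Hba : b < a) by (unfold a, b; nra).
  assert (Ha1 : a <= 1) by (unfold a; nra).
  destruct (pow_lt_1_zero (b / a) ltac:(rewrite Rabs_right; [apply (Rmult_lt_reg_r a); [lra|]; field_simplify; lra| apply Rle_ge, Rlt_le, Rdiv_lt_0_compat; lra]) (delta * eta / (2 * M)) ltac:(apply Rdiv_lt_0_compat; nra)) as [N HN].
  specialize (HN N (le_n N)).
  rewrite Rabs_right in HN by (apply Rle_ge, pow_le, Rlt_le, Rdiv_lt_0_compat; lra).
  assert (HaN : 0 < a ^ N) by (apply pow_lt; lra).
  assert (HbN : b ^ N = (b / a) ^ N * a ^ N) by (rewrite <- Rpow_mult_distr; f_equal; field; lra).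
  assert (Key : 2 * M * b ^ N < delta * eta * a ^ N).
  { rewrite HbN. apply (Rmult_lt_compat_r (a^N)) in HN; auto.
    apply (Rmult_lt_compat_l (2 * M)) in HN; [|lra].
    replace (2 * M * (delta * eta / (2 * M) * a ^ N)) with (delta * eta * a ^ N) in HN by (field; lra).
    lra. }
  set (F := fun t => h t * (1 - (t - s)^2/4)^N).
  assert (Fc : forall t, continuous F t).
  { intros t. apply (continuous_mult h (fun t => (1 - (t - s)^2/4)^N)). apply hc. apply q_cont. }
  assert (Hq0 : forall t, -1 <= t <= 1 -> 0 <= 1 - (t - s)^2/4) by (intros; nra).
  assert (I0 : RInt F (-1) 1 = 0) by (apply HK; auto).
  rewrite (chasles F (-1) (s - eta) 1 Fc) in I0.
  rewrite (chasles F (s - eta) (s - eta/2) 1 Fc) in I0.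
  rewrite (chasles F (s - eta/2) (s + eta/2) 1 Fc) in I0.
  rewrite (chasles F (s + eta/2) (s + eta) 1 Fc) in I0.
  assert (J1 : (- M * b ^ N) * ((s - eta) - (-1)) <= RInt F (-1) (s - eta)).
  { apply RInt_ge_const; auto. lra. intros t Ht. unfold F.
    assert (0 <= 1 - (t - s)^2/4) by (apply Hq0; lra).
    assert (1 - (t - s)^2/4 <= b) by (unfold b; nra).
    assert (0 <= (1 - (t - s)^2/4)^N) by (apply pow_le; lra).
    assert ((1 - (t - s)^2/4)^N <= b^N) by (apply pow_incr; lra).
    assert (- M <= h t) by (apply HMb; lra).
    assert (0 <= b^N) by (apply pow_le; lra).
    nra. }
  assert (J5 : (- M * b ^ N) * (1 - (s + eta)) <= RInt F (s + eta) 1).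
  { apply RInt_ge_const; auto. lra. intros t Ht. unfold F.
    assert (0 <= 1 - (t - s)^2/4) by (apply Hq0; lra).
    assert (1 - (t - s)^2/4 <= b) by (unfold b; nra).
    assert (0 <= (1 - (t - s)^2/4)^N) by (apply pow_le; lra).
    assert ((1 - (t - s)^2/4)^N <= b^N) by (apply pow_incr; lra).
    assert (- M <= h t) by (apply HMb; lra).
    assert (0 <= b^N) by (apply pow_le; lra).
    nra. }
  assert (J2 : 0 * ((s - eta/2) - (s - eta)) <= RInt F (s - eta) (s - eta/2)).
  { apply RInt_ge_const; auto. lra. intros t Ht. unfold F.
    assert (0 <= (1 - (t - s)^2/4)^N) by (apply pow_le, Hq0; lra).
    assert (delta < h t) by (apply Hnear; lra). nra. }
  assert (J4 : 0 * ((s + eta) - (s + eta/2)) <= RInt F (s + eta/2) (s + eta)).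
  { apply RInt_ge_const; auto. lra. intros t Ht. unfold F.
    assert (0 <= (1 - (t - s)^2/4)^N) by (apply pow_le, Hq0; lra).
    assert (delta < h t) by (apply Hnear; lra). nra. }
  assert (J3 : (delta * a ^ N) * ((s + eta/2) - (s - eta/2)) <= RInt F (s - eta/2) (s + eta/2)).
  { apply RInt_ge_const; auto. lra. intros t Ht. unfold F.
    assert (a <= 1 - (t - s)^2/4) by (unfold a; nra).
    assert (a^N <= (1 - (t - s)^2/4)^N) by (apply pow_incr; lra).
    assert (delta < h t) by (apply Hnear; lra). nra. }
  assert (0 <= M * b ^ N) by (apply Rmult_le_pos; [lra| apply pow_le; lra]).
  nra.
Qed.
Definition ode_sol (c chi : R) (f f1 f2 : R -> R) := forall x, 1 < x ->
  is_derive f x (f1 x) /\ is_derive f1 x (f2 x) /\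
  (1 - x^2) * f2 x - 2*x*f1 x + (chi - c^2*x^2) * f x = 0.

Definition sq x := sqrt (x^2 - 1).
Definition Phi (f : R -> R) x := sq x * f x.
Definition Phi1 (f f1 : R -> R) x := sq x * f1 x + x * f x / sq x.
Definition Qf c chi x := c^2 + ((c^2 - chi)*(x^2-1) + 1)/((x^2-1)^2).



Lemma sq_pos x : 1 < x -> 0 < sq x.
Proof. intros; unfold sq; apply sqrt_lt_R0; nra. Qed.

Lemma sq_sq x : 1 < x -> sq x * sq x = x^2 - 1.
Proof. intros; unfold sq; apply sqrt_sqrt; nra. Qed.

Lemma sq_der x : 1 < x -> is_derive sq x (x / sq x).
Proof.
  intros Hx. unfold sq.
  apply (is_derive_eq _ _ ((2*x)/(2*sqrt(x^2-1)))).
  - apply (is_derive_sqrt (fun y => y^2-1) x (2*x)). 2: nra.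
    auto_derive. exact I. ring.
  - field. apply Rgt_not_eq, sqrt_lt_R0. nra.
Qed.

Lemma Phi_der c chi f f1 f2 x : ode_sol c chi f f1 f2 -> 1 < x ->
  is_derive (Phi f) x (Phi1 f f1 x) /\
  is_derive (Phi1 f f1) x (- Qf c chi x * Phi f x).
Proof.
  intros H Hx. destruct (H x Hx) as [d1 [d2 E]].
  pose proof (sq_der x Hx) as ds. pose proof (sq_pos x Hx) as sp.
  pose proof (sq_sq x Hx) as ss.
  split.
  - unfold Phi, Phi1. eapply is_derive_eq.
    + apply (is_derive_mult sq f x _ _ ds d1). intros; apply Rmult_comm.
    + unfold plus, mult; simpl. field. lra.
  - unfold Phi1, Phi. eapply is_derive_eq.
    + apply (is_derive_plus (fun y => sq y * f1 y) (fun y => y * f y / sq y)).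
      * apply (is_derive_mult sq f1 x _ _ ds d2). intros; apply Rmult_comm.
      * apply is_derive_div. 2: exact ds. 2: lra.
        apply (is_derive_mult (fun y => y) f x _ _ (is_derive_id x) d1).
        intros; apply Rmult_comm.
    + unfold plus, mult, one; simpl.
      assert (F2 : f2 x = (2*x*f1 x - (chi - c^2*x^2) * f x)/(1 - x^2)).
      { field_simplify_eq; [nra | nra]. }
      rewrite F2. unfold Qf. set (s := sq x) in *.
      replace (1 - x^2) with (-(s*s)) by lra.
      replace (x^2 - 1) with (s*s) by lra.
      assert (X2 : x^2 = s*s+1) by lra.
      field_simplify_eq; [| lra]. rewrite X2. ring.
Qed.

Lemma wron_der (P P1 U U1 : R -> R) (A B x : R) :
  is_derive P x (P1 x) -> is_derive P1 x (-A * P x) ->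
  is_derive U x (U1 x) -> is_derive U1 x (-B * U x) ->
  is_derive (fun y => P1 y * U y - P y * U1 y) x ((B - A) * P x * U x).
Proof.
  intros dP dP1 dU dU1.
  apply (is_derive_eq _ _ ((-A * P x) * U x + P1 x * U1 x - (P1 x * U1 x + P x * (-B * U x)))).
  - apply (is_derive_minus (fun y => P1 y * U y) (fun y => P y * U1 y)).
    + apply (is_derive_mult P1 U x _ _ dP1 dU). intros; apply Rmult_comm.
    + apply (is_derive_mult P U1 x _ _ dP dU1). intros; apply Rmult_comm.
  - ring.
Qed.

Lemma Qf_gt c chi x : chi < c^2 -> 1 < x -> c^2 < Qf c chi x.
Proof.
  intros Hc Hx. unfold Qf.
  assert (0 < ((c ^ 2 - chi) * (x ^ 2 - 1) + 1) / (x ^ 2 - 1) ^ 2).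
  { assert (0 < x^2-1) by nra. assert (0 < c^2 - chi) by lra.
    apply Rdiv_lt_0_compat. nra. apply pow_lt; lra. }
  lra.
Qed.

Lemma Qf_decr c chi u v : chi < c^2 -> 1 < u -> u < v -> Qf c chi v < Qf c chi u.
Proof.
  intros Hc Hu Huv. unfold Qf.
  set (K := c^2 - chi). set (p := u^2-1). set (q := v^2-1).
  assert (0 < p) by (unfold p; nra). assert (p < q) by (unfold p, q; nra).
  replace ((K * q + 1) / q ^ 2) with (K * / q + / q * / q) by (field; lra).
  replace ((K * p + 1) / p ^ 2) with (K * / p + / p * / p) by (field; lra).
  assert (/ q < / p) by (apply Rinv_lt_contravar; nra).
  assert (0 < / q) by (apply Rinv_0_lt_compat; lra).
  assert (0 < K) by (unfold K; lra).
  nra.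
Qed.

Lemma deriv_cont (f : R -> R) x l : is_derive f x l -> continuity_pt f x.
Proof.
  intros H. apply continuity_pt_filterlim. apply (ex_derive_continuous f x).
  exists l; exact H.
Qed.

Lemma gap_le c chi f f1 f2 a b : 0 < c -> chi < c^2 -> ode_sol c chi f f1 f2 ->
  1 < a -> a < b -> f a = 0 -> (forall t, a < t < b -> 0 < f t) -> b - a <= PI / c.
Proof.
  intros Hc Hchi H Ha Hab Hfa Hpos.
  destruct (Rle_or_lt (b - a) (PI / c)) as [|Hlt]; [assumption|exfalso].
  set (e := a + PI / c).
  assert (HPc : 0 < PI / c) by (apply Rdiv_lt_0_compat; [apply PI_RGT_0|lra]).
  assert (Hae : a < e) by (unfold e; lra).
  assert (Heb : e < b) by (unfold e; lra).
  set (U := fun y => sin (c * (y - a))).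
  set (U1 := fun y => c * cos (c * (y - a))).
  set (W := fun y => Phi1 f f1 y * U y - Phi f y * U1 y).
  set (dW := fun y => (c^2 - Qf c chi y) * Phi f y * U y).
  assert (HW : forall y, 1 < y -> is_derive W y (dW y)).
  { intros y Hy. destruct (Phi_der c chi f f1 f2 y H Hy) as [d1 d2].
    apply wron_der; auto.
    - unfold U, U1. auto_derive. exact I. unfold Rminus; rewrite Rmult_1_r; reflexivity.
    - unfold U, U1. auto_derive. exact I. unfold Rminus; req; ring. }
  destruct (MVT_gen W a e dW) as [xi [Hxi Heq]].
  - rewrite Rmin_left, Rmax_right by lra. intros y Hy. apply HW; lra.
  - rewrite Rmin_left, Rmax_right by lra. intros y Hy. apply (deriv_cont _ _ _ (HW y ltac:(lra))).
  - rewrite Rmin_left, Rmax_right in Hxi by lra.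
    assert (W a = 0).
    { unfold W, U, U1, Phi. rewrite Hfa. replace (c * (a - a)) with 0 by ring.
      rewrite sin_0. ring. }
    assert (Hce : c * (e - a) = PI) by (unfold e; field; lra).
    assert (0 < W e).
    { unfold W, U, U1, Phi. rewrite Hce, sin_PI, cos_PI.
      assert (0 < sq e) by (apply sq_pos; lra).
      assert (0 < f e) by (apply Hpos; lra). rewrite Rmult_0_r. assert (0 < sq e * f e * c) by (repeat apply Rmult_lt_0_compat; lra). lra. }
    assert (dW xi <= 0).
    { unfold dW. assert (c^2 < Qf c chi xi) by (apply Qf_gt; lra).
      assert (0 <= Phi f xi).
      { unfold Phi. assert (0 < sq xi) by (apply sq_pos; lra).
        destruct (Req_dec xi a) as [->|]. rewrite Hfa; lra.
        assert (0 < f xi) by (apply Hpos; lra). nra. }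
      assert (0 <= U xi).
      { unfold U. apply sin_ge_0. nra.
        assert (c * (xi - a) <= c * (e - a)) by (apply Rmult_le_compat_l; lra). lra. }
      assert (0 <= Phi f xi * U xi) by nra. nra. }
    nra.
Qed.

Lemma shift_der (F : R -> R) (x d l : R) : is_derive F (x - d) l -> is_derive (fun y => F (y - d)) x l.
Proof.
  intros H. apply (is_derive_eq _ _ (scal 1 l)).
  - apply (is_derive_comp F (fun y => y - d)). exact H.
    auto_derive; [exact I | req; ring].
  - unfold scal; simpl. unfold mult; simpl. ring.
Qed.

Lemma mvt_strict (F dF : R -> R) (a b : R) : a < b ->
  (forall y, a <= y <= b -> is_derive F y (dF y)) ->
  exists xi, F b - F a = dF xi * (b - a) /\ a < xi < b.
Proof.
  intros Hab H. apply MVT_cor2; auto. intros y Hy. apply is_derive_Reals, H; auto.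
Qed.

Lemma gap_mono c chi f f1 f2 g g1 g2 x0 a b : 0 < c -> chi < c^2 ->
  ode_sol c chi f f1 f2 -> ode_sol c chi g g1 g2 ->
  1 < x0 -> x0 < a -> a < b -> f x0 = 0 -> (forall t, x0 < t < a -> 0 < f t) ->
  g a = 0 -> g b = 0 -> (forall t, a < t < b -> 0 < g t) -> a - x0 <= b - a.
Proof.
  intros Hc Hchi Hf Hg H1 H0a Hab Hfx0 Hfpos Hga Hgb Hgpos.
  destruct (Rle_or_lt (a - x0) (b - a)) as [|Hlt]; [assumption|exfalso].
  set (d := a - x0).
  set (V := fun y => Phi f (y - d)).
  set (V1 := fun y => Phi1 f f1 (y - d)).
  set (W := fun y => Phi1 g g1 y * V y - Phi g y * V1 y).
  set (dW := fun y => (Qf c chi (y - d) - Qf c chi y) * Phi g y * V y).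
  assert (HW : forall y, a <= y -> is_derive W y (dW y)).
  { intros y Hy. destruct (Phi_der c chi g g1 g2 y Hg ltac:(lra)) as [d1 d2].
    destruct (Phi_der c chi f f1 f2 (y - d) Hf ltac:(unfold d; lra)) as [e1 e2].
    apply wron_der; auto.
    - unfold V, V1. apply shift_der; auto.
    - unfold V, V1. apply shift_der; auto. }
  assert (HVpos : forall y, a < y <= b -> 0 < V y).
  { intros y Hy. unfold V, Phi. apply Rmult_lt_0_compat.
    apply sq_pos; unfold d; lra. apply Hfpos; unfold d; lra. }
  assert (HWa : W a = 0).
  { unfold W, V, V1, Phi. replace (a - d) with x0 by (unfold d; ring).
    rewrite Hfx0, Hga. ring. }
  assert (HWpos : forall y, a < y <= b -> 0 < W y).
  { intros y Hy. destruct (mvt_strict W dW a y ltac:(lra)) as [xi [E Hxi]].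
    { intros z Hz; apply HW; lra. }
    assert (0 < dW xi).
    { unfold dW. assert (Qf c chi xi < Qf c chi (xi - d)).
      { apply Qf_decr; unfold d; lra. }
      assert (0 < Phi g xi).
      { unfold Phi. apply Rmult_lt_0_compat. apply sq_pos; lra. apply Hgpos; lra. }
      assert (0 < V xi) by (apply HVpos; lra).
      assert (0 < Qf c chi (xi - d) - Qf c chi xi) by lra.
      apply Rmult_lt_0_compat; [apply Rmult_lt_0_compat|]; assumption. }
    assert (0 < dW xi * (y - a)) by (apply Rmult_lt_0_compat; lra). lra. }
  set (t := (a + b) / 2).
  set (r := fun y => Phi g y / V y).
  destruct (mvt_strict r (fun y => W y / (V y)^2) t b ltac:(unfold t; lra)) as [xi [E Hxi]].
  { intros y Hy. assert (0 < V y) by (apply HVpos; unfold t in Hy; lra).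
    destruct (Phi_der c chi g g1 g2 y Hg ltac:(unfold t in Hy; lra)) as [d1 d2].
    destruct (Phi_der c chi f f1 f2 (y - d) Hf ltac:(unfold d, t in *; lra)) as [e1 e2].
    unfold r. apply (is_derive_eq _ _ ((Phi1 g g1 y * V y - Phi g y * V1 y) / V y ^ 2)).
    apply is_derive_div; auto. unfold V; apply shift_der; auto. lra.
    reflexivity. }
  assert (r b = 0).
  { unfold r, Phi. rewrite Hgb. unfold Rdiv; ring. }
  assert (0 < r t).
  { unfold r. apply Rdiv_lt_0_compat. unfold Phi. apply Rmult_lt_0_compat.
    apply sq_pos; unfold t; lra. apply Hgpos; unfold t; lra. apply HVpos; unfold t; lra. }
  assert (0 < W xi / V xi ^ 2).
  { apply Rdiv_lt_0_compat. apply HWpos; unfold t in Hxi; lra.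
    apply pow_lt. apply HVpos; unfold t in Hxi; lra. }
  assert (0 < W xi / V xi ^ 2 * (b - t)) by (apply Rmult_lt_0_compat; unfold t; lra).
  lra.
Qed.
Lemma fourier_zero_neg (h : R -> R) : (forall t, continuous h t) ->
  (forall w, RInt (fun t => h t * cos (1 * w * t)) (-1) 1 = 0 /\
             RInt (fun t => h t * sin (1 * w * t)) (-1) 1 = 0) ->
  forall s, -1 < s < 1 -> h s <= 0.
Proof.
  intros hc H0. apply kill; auto. intros s N _.
  pose proof (moments h hc H0) as Hm.
  assert (Hm0 : forall m, RInt (fun t => h t * t^m) (-1) 1 = 0).
  { intros m. rewrite <- (proj1 (Hm m 0)). apply RInt_ext. intros t _. req.
    replace (1 * 0 * t) with 0 by ring. rewrite cos_0. ring. }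
  rewrite <- (kernel h s hc Hm0 N 0). apply RInt_ext. intros t _. req. simpl. ring.
Qed.

Lemma RInt_neg (h : R -> R) a b : (forall t, continuous h t) -> RInt (fun t => - h t) a b = - RInt h a b.
Proof. intros H. apply (RInt_opp (V := R_CompleteNormedModule)). apply cont_exab; auto. Qed.

Lemma fourier_zero (h : R -> R) : (forall t, continuous h t) ->
  (forall w, RInt (fun t => h t * cos (1 * w * t)) (-1) 1 = 0 /\
             RInt (fun t => h t * sin (1 * w * t)) (-1) 1 = 0) ->
  forall s, -1 < s < 1 -> h s = 0.
Proof.
  intros hc H0 s Hs. apply Rle_antisym.
  - apply fourier_zero_neg; auto.
  - assert (- h s <= 0); [|lra].
    apply (fourier_zero_neg (fun t => - h t)); auto.
    + intros t. apply (continuous_opp h). apply hc.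
    + intros w. destruct (H0 w) as [A B]. split.
      * transitivity (- RInt (fun t => h t * cos (1 * w * t)) (-1) 1); [|rewrite A; req; ring].
        rewrite <- RInt_neg. apply RInt_ext. intros; req; ring.
        intros t. apply (continuous_mult h (fun t => cos (1 * w * t))). apply hc.
        apply (continuous_comp (fun t => 1 * w * t) cos). 2: apply cont_cos.
        apply (@ex_derive_continuous R_AbsRing R_NormedModule). auto_derive. exact I.
      * transitivity (- RInt (fun t => h t * sin (1 * w * t)) (-1) 1); [|rewrite B; req; ring].
        rewrite <- RInt_neg. apply RInt_ext. intros; req; ring.
        intros t. apply (continuous_mult h (fun t => sin (1 * w * t))). apply hc.
        apply (continuous_comp (fun t => 1 * w * t) sin). 2: apply cont_sin.
        apply (@ex_derive_continuous R_AbsRing R_NormedModule). auto_derive. exact I.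
Qed.

Lemma lam_nz c psi lam chi n : 0 < c -> is_PSWF_family c psi lam chi ->
  Re (lam n) <> 0 \/ Im (lam n) <> 0.
Proof.
  intros Hc Hf. destruct Hf as [hc [Hfc [Hn _]]].
  destruct (Req_dec (Re (lam n)) 0) as [HR|HR]; [|left; auto].
  destruct (Req_dec (Im (lam n)) 0) as [HI|HI]; [|right; auto].
  exfalso.
  assert (Z : forall w, RInt (fun t => psi n t * cos (1 * w * t)) (-1) 1 = 0 /\
             RInt (fun t => psi n t * sin (1 * w * t)) (-1) 1 = 0).
  { intros w. destruct (Hfc n (w / c)) as [A B].
    assert (E : forall t, c * (w / c) * t = 1 * w * t) by (intros; field; lra).
    split.
    - transitivity (RInt (fun t => psi n t * cos (c * (w / c) * t)) (-1) 1).
      apply RInt_ext; intros; rewrite E; reflexivity. rewrite <- A, HR. req; ring.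
    - transitivity (RInt (fun t => psi n t * sin (c * (w / c) * t)) (-1) 1).
      apply RInt_ext; intros; rewrite E; reflexivity. rewrite <- B, HI. req; ring. }
  pose proof (fourier_zero (psi n) (hc n) Z) as Z0.
  specialize (Hn n).
  assert (RInt (fun t => psi n t ^ 2) (-1) 1 = RInt (fun _ => 0) (-1) 1).
  { apply RInt_ext. intros t Ht. rewrite Rmin_left, Rmax_right in Ht by lra.
    rewrite Z0 by lra. req. ring. }
  rewrite Hn, RInt_const in H. unfold scal in H; simpl in H. unfold mult in H; simpl in H.
  lra.
Qed.

Lemma psi_ex_der c psi lam chi n : 0 < c -> is_PSWF_family c psi lam chi ->
  forall x, ex_derive (psi n) x.
Proof.
  intros Hc Hf x. pose proof (lam_nz c psi lam chi n Hc Hf) as Hnz.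
  destruct Hf as [hc [Hfc _]].
  destruct Hnz as [HR|HI].
  - apply (ex_derive_ext (fun x => / Re (lam n) * RInt (fun t => psi n t * cos (c * x * t)) (-1) 1)).
    + intros y. destruct (Hfc n y) as [A _]. rewrite <- A. req. field. auto.
    + eexists. apply is_derive_scal. apply (param_trig (psi n) cos (fun z => - sin z) c (hc n) cos_d cont_nsin).
  - apply (ex_derive_ext (fun x => / Im (lam n) * RInt (fun t => psi n t * sin (c * x * t)) (-1) 1)).
    + intros y. destruct (Hfc n y) as [_ B]. rewrite <- B. req. field. auto.
    + eexists. apply is_derive_scal. apply (param_trig (psi n) sin cos c (hc n) sin_d cont_cos).
Qed.

Lemma psi_ode c psi lam chi n : 0 < c -> is_PSWF_family c psi lam chi ->
  ode_sol c (chi n) (psi n) (Derive (psi n)) (Derive (Derive (psi n))).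
Proof.
  intros Hc Hf x Hx. pose proof (psi_ex_der c psi lam chi n Hc Hf x) as Hd.
  destruct Hf as [_ [_ [_ [_ [_ [_ [_ [_ Hode]]]]]]]].
  destruct (Hode n x) as [H2 E].
  split; [|split].
  - apply Derive_correct; auto.
  - apply Derive_correct. exact H2.
  - exact E.
Qed.

Lemma ode_neg c chi f f1 f2 : ode_sol c chi f f1 f2 ->
  ode_sol c chi (fun x => - f x) (fun x => - f1 x) (fun x => - f2 x).
Proof.
  intros H x Hx. destruct (H x Hx) as [A [B E]]. split; [|split].
  - apply (is_derive_opp f x (f1 x)); auto.
  - apply (is_derive_opp f1 x (f2 x)); auto.
  - lra.
Qed.

Lemma incr_lt (X : nat -> R) : (forall k, X k < X (S k)) -> forall i j, (i < j)%nat -> X i < X j.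
Proof.
  intros H i j Hij. induction Hij. apply H. specialize (H m). lra.
Qed.

Lemma sign_const (f : R -> R) a b : (forall t, continuous f t) -> a < b ->
  (forall t, a < t < b -> f t <> 0) ->
  (forall t, a < t < b -> 0 < f t) \/ (forall t, a < t < b -> f t < 0).
Proof.
  intros hc Hab Hnz.
  assert (Hcont : continuity f) by (intros t; apply cont_pt, hc).
  assert (Hcontn : continuity (fun t => - f t)) by (intros t; apply cont_pt, (continuous_opp f), hc).
  set (m := (a + b) / 2).
  assert (Hm : a < m < b) by (unfold m; lra).
  assert (NoCross : forall t1 t2, a < t1 < b -> a < t2 < b -> 0 < f t1 -> ~ f t2 < 0).
  { intros t1 t2 H1 H2 P Q.
    destruct (Rtotal_order t1 t2) as [L|[L|L]].
    - destruct (IVT (fun t => - f t) t1 t2 Hcontn L ltac:(lra) ltac:(lra)) as [z [Hz Ez]].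
      apply (Hnz z); lra.
    - subst; lra.
    - destruct (IVT f t2 t1 Hcont L Q P) as [z [Hz Ez]]. apply (Hnz z); lra. }
  destruct (Rtotal_order (f m) 0) as [L|[L|L]].
  - right. intros t Ht. destruct (Rtotal_order (f t) 0) as [|[|]]; auto.
    exfalso; apply (Hnz t Ht); auto. exfalso; apply (NoCross t m); auto.
  - exfalso; apply (Hnz m); auto.
  - left. intros t Ht. destruct (Rtotal_order (f t) 0) as [|[|]]; auto.
    exfalso; apply (NoCross m t); auto. exfalso; apply (Hnz t Ht); auto.
Qed.

Lemma pos_piece c chi f f1 f2 (X : nat -> R) i : ode_sol c chi f f1 f2 ->
  (forall t, continuous f t) -> enumerates_roots_gt1 f X ->
  exists g g1 g2, ode_sol c chi g g1 g2 /\ g (X i) = 0 /\ g (X (S i)) = 0 /\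
    (forall t, X i < t < X (S i) -> 0 < g t).
Proof.
  intros Ho hc [Hr [Hinc Hall]].
  assert (Hnz : forall t, X i < t < X (S i) -> f t <> 0).
  { intros t Ht E. destruct (Hall t) as [j Hj]. pose proof (proj1 (Hr i)). lra. auto.
    destruct (Nat.lt_ge_cases i j) as [L|L].
    - destruct (Nat.lt_ge_cases j (S i)) as [L2|L2]. lia.
      destruct (Nat.eq_dec j (S i)) as [->|N]. lra.
      pose proof (incr_lt X Hinc (S i) j ltac:(lia)). lra.
    - destruct (Nat.eq_dec j i) as [->|N]. lra.
      pose proof (incr_lt X Hinc j i ltac:(lia)). lra. }
  destruct (sign_const f (X i) (X (S i)) hc (Hinc i) Hnz) as [P|Nn].
  - exists f, f1, f2. split; [auto| split; [apply Hr| split; [apply Hr| auto]]].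
  - exists (fun x => - f x), (fun x => - f1 x), (fun x => - f2 x).
    split; [apply ode_neg; auto| split; [| split]].
    rewrite (proj2 (Hr i)); ring. rewrite (proj2 (Hr (S i))); ring.
    intros t Ht. specialize (Nn t Ht). lra.
Qed.

Theorem theorem33 (c : R) (psi : nat -> R -> R) (lam : nat -> C)
    (chi : nat -> R) (n : nat) (x : nat -> R) :
  0 < c -> is_PSWF_family c psi lam chi -> chi n < c ^ 2 ->
  enumerates_roots_gt1 (psi n) x ->
  forall k : nat,
    x (S k) - x k <= x (S (S k)) - x (S k) /\ x (S k) - x k <= PI / c.
Proof.
  intros Hc Hf Hchi Hen k.
  pose proof (psi_ode c psi lam chi n Hc Hf) as Ho.
  assert (hc : forall t, continuous (psi n) t) by (intros; apply Hf).
  destruct (pos_piece _ _ _ _ _ x k Ho hc Hen) as [g [g1 [g2 [Hg [G0 [G1 Gp]]]]]].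
  destruct (pos_piece _ _ _ _ _ x (S k) Ho hc Hen) as [h [h1 [h2 [Hh [H0 [H1 Hp]]]]]].
  destruct Hen as [Hr [Hinc _]].
  split.
  - apply (gap_mono c (chi n) g g1 g2 h h1 h2); auto; apply Hr || apply Hinc || idtac.
  - apply (gap_le c (chi n) g g1 g2); auto; apply Hr || apply Hinc.
Qed.
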